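(* Let $R>0$, let $\Theta$ be a smooth function on $[0,R]$ that is positive on $[0,R)$, let $\sigma\in\mathbb{R}\setminus\{0\}$, and let $u$ be a positive first eigenfunction of $$u''+\frac{\Theta'}{\Theta}u'+\lambda u=0 \text{ on }[0,R],\qquad u'(0)=\sigma u(0),\qquad u'(R)=0,$$ with first eigenvalue $\lambda_1(R,\Theta,\sigma)$. Then: (a) if $\sigma>0$, then $u'>0$ on $[0,R)$; (b) if $\sigma<0$, then $u'<0$ on $[0,R)$; (c) if $\sigma>0$ and $0<\bar R<R$, then $\lambda_1(R,\Theta,\sigma)<\lambda_1(\bar R,\Theta,\sigma)$, where $\lambda_1(\bar R,\Theta,\sigma)$ is the first eigenvalue of the same problem on $[0,\bar R]$ with conditions $u'(0)=\sigma u(0)$, $u'(\bar R)=0$. Moreover, set $\sigma(r)=u'(r)/u(r)$ and assume in addition that $(\log\Theta)''<0$ on $[0,R)$. Then: (d) if $\sigma>0$, then $0\leq\sigma(r)\leq\sigma$ for all $r\in[0,R]$; (e) if $\sigma<0$, then $\sigma\leq\sigma(r)\leq0$ for all $r\in[0,R]$.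
   Context: The eigenvalue problem is the spectral problem for $Lu=-u''-\frac{\Theta'}{\Theta}u'$ on $L^2([0,R],\Theta(r)\,dr)$ with the given boundary conditions; its first eigenvalue is $\lambda_1(R,\Theta,\sigma)=\inf_{u\in H^1[0,R]}\frac{\int_0^Ru'^2\Theta\,dr+\sigma u(0)^2}{\int_0^Ru^2\Theta\,dr}$. *)

(* Defs.v *)
From Stdlib Require Import Reals.
From Coquelicot Require Import Coquelicot.
Open Scope R_scope.

(* Smooth function on R.  (A smooth function on [0,R] in the one-sided sense
   extends to a smooth function on R, so this is no loss of generality.) *)
Definition smooth (f : R -> R) : Prop :=
  forall (n : nat) (x : R), ex_derive (Derive_n f n) x.

(* C^2 function on R (again: a C^2 function on [0,R] extends to R). *)
Definition C2 (f : R -> R) : Prop :=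
  (forall x, ex_derive f x) /\ (forall x, ex_derive (Derive f) x) /\
  (forall x, continuous (Derive_n f 2) x).

(* u is an eigenfunction, with eigenvalue lam, of
     u'' + (Theta'/Theta) u' + lam u = 0  on [0,Rr),
     u'(0) = sigma u(0),  u'(Rr) = 0,
   u nonzero on [0,Rr].  The equation is imposed on [0,Rr) because Theta may
   vanish at Rr (it is only assumed positive on [0,Rr)). *)
Definition is_eigenpair (Rr : R) (Theta : R -> R) (sigma lam : R) (u : R -> R)
  : Prop :=
  C2 u /\
  (exists x, 0 <= x <= Rr /\ u x <> 0) /\
  (forall r, 0 <= r < Rr ->
     Derive_n u 2 r + Derive Theta r / Theta r * Derive u r + lam * u r = 0) /\
  Derive u 0 = sigma * u 0 /\
  Derive u Rr = 0.

Definition lambda1 (Rr : R) (Theta : R -> R) (sigma : R) : Rbar :=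
  Glb_Rbar (fun lam => exists u, is_eigenpair Rr Theta sigma lam u).

(* Main.v *)
Require Import Defs.
From Stdlib Require Import Reals Lra.
From Coquelicot Require Import Coquelicot.
Open Scope R_scope.

Lemma mvt (f : R -> R) a b : a < b -> (forall x, a <= x <= b -> ex_derive f x) ->
  exists c, a < c < b /\ f b - f a = Derive f c * (b - a).
Proof.
  intros Hab Hd.
  destruct (MVT_cor2 f (Derive f) a b Hab) as [c [Hc1 Hc2]].
  - intros c Hc. apply is_derive_Reals. apply Derive_correct. auto.
  - exists c. split; auto.
Qed.

Lemma mono (f : R -> R) a b : a <= b -> (forall x, a <= x <= b -> ex_derive f x) ->
  (forall x, a < x < b -> 0 <= Derive f x) -> f a <= f b.
Proof.
  intros Hab Hd Hp. destruct (Req_dec a b) as [->|Hne]; [lra|].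
  destruct (mvt f a b) as [c [Hc Hc2]]; auto; try lra.
  specialize (Hp c Hc). nra.
Qed.

Lemma deriv_sign (f : R -> R) c l : is_derive f c l -> 0 < l ->
  exists d, 0 < d /\ forall h, h <> 0 -> Rabs h < d -> 0 < (f (c + h) - f c) / h.
Proof.
  intros Hd Hl. apply is_derive_Reals in Hd.
  destruct (Hd (l/2) ltac:(lra)) as [d Hd2].
  exists d. split; [apply cond_pos|].
  intros h Hh Hh2. specialize (Hd2 h Hh Hh2).
  apply Rabs_def2 in Hd2. lra.
Qed.

Lemma deriv_pos_right (f : R -> R) c l : is_derive f c l -> 0 < l ->
  exists d, 0 < d /\ forall x, c < x < c + d -> f c < f x.
Proof.
  intros Hd Hl. destruct (deriv_sign f c l Hd Hl) as [d [Hd0 H]].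
  exists d. split; auto. intros x Hx.
  specialize (H (x - c) ltac:(lra) ltac:(rewrite Rabs_right; lra)).
  replace (c + (x - c)) with x in H by ring.
  assert (E : f x - f c = ((f x - f c) / (x - c)) * (x - c)) by (field; lra).
  nra.
Qed.

Lemma deriv_pos_left (f : R -> R) c l : is_derive f c l -> 0 < l ->
  exists d, 0 < d /\ forall x, c - d < x < c -> f x < f c.
Proof.
  intros Hd Hl. destruct (deriv_sign f c l Hd Hl) as [d [Hd0 H]].
  exists d. split; auto. intros x Hx.
  specialize (H (x - c) ltac:(lra) ltac:(rewrite Rabs_left; lra)).
  replace (c + (x - c)) with x in H by ring.
  assert (E : f x - f c = ((f x - f c) / (x - c)) * (x - c)) by (field; lra).
  nra.
Qed.


Ltac eta_fix := repeat match goal with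
  | |- context [Derive (fun x => ?f x) ?y] =>
      change (Derive (fun x => f x) y) with (Derive f y) end.


Lemma local_max_deriv0 (f : R -> R) c l : is_derive f c l ->
  (exists d, 0 < d /\ forall x, c - d < x < c + d -> f x <= f c) -> l = 0.
Proof.
  intros Hd [d [Hd0 Hm]].
  destruct (Rtotal_order l 0) as [Hl|[Hl|Hl]]; auto.
  - assert (Hd' : is_derive (fun x => - f x) c (- l)).
    { apply is_derive_Reals. apply derivable_pt_lim_opp. apply is_derive_Reals. auto. }
    destruct (deriv_pos_left _ _ _ Hd' ltac:(lra)) as [d' [Hd'0 H]].
    set (x := c - Rmin d d' / 2).
    assert (0 < Rmin d d') by (apply Rmin_pos; auto).
    assert (Rmin d d' <= d) by apply Rmin_l.
    assert (Rmin d d' <= d') by apply Rmin_r.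
    specialize (H x ltac:(unfold x; lra)). specialize (Hm x ltac:(unfold x; lra)). lra.
  - destruct (deriv_pos_right _ _ _ Hd Hl) as [d' [Hd'0 H]].
    set (x := c + Rmin d d' / 2).
    assert (0 < Rmin d d') by (apply Rmin_pos; auto).
    assert (Rmin d d' <= d) by apply Rmin_l.
    assert (Rmin d d' <= d') by apply Rmin_r.
    specialize (H x ltac:(unfold x; lra)). specialize (Hm x ltac:(unfold x; lra)). lra.
Qed.

Lemma push_right (s h : R -> R) m b l : m < b ->
  (forall x, m <= x <= b -> ex_derive s x) ->
  (forall x, m < x < b -> Derive s x = h x) -> h m = 0 -> is_derive h m l -> 0 < l ->
  exists x, m < x <= b /\ s m < s x.
Proof.
  intros Hmb Hs Hsh Hh0 Hd Hl.
  destruct (deriv_pos_right _ _ _ Hd Hl) as [d [Hd0 H]].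
  set (x := m + Rmin d (b - m) / 2).
  assert (0 < Rmin d (b - m)) by (apply Rmin_pos; lra).
  assert (Rmin d (b - m) <= d) by apply Rmin_l.
  assert (Rmin d (b - m) <= b - m) by apply Rmin_r.
  exists x. split; [unfold x; lra|].
  destruct (mvt s m x) as [c [Hc Hc2]]; [unfold x; lra| intros; apply Hs; unfold x in *; lra|].
  rewrite Hsh in Hc2 by (unfold x in *; lra).
  specialize (H c ltac:(unfold x in *; lra)).
  assert (0 < x - m) by (unfold x; lra). nra.
Qed.

Lemma cont_of_der (f : R -> R) x : ex_derive f x -> continuity_pt f x.
Proof. intros H. apply continuity_pt_filterlim. apply (ex_derive_continuous f x H). Qed.

Lemma locally_pos (f : R -> R) x : continuity_pt f x -> 0 < f x -> locally x (fun y => 0 < f y).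
Proof.
  intros Hc Hp. apply continuity_pt_locally with (eps := mkposreal _ Hp) in Hc.
  eapply filter_imp; [|exact Hc]. simpl. intros y Hy. apply Rabs_def2 in Hy. lra.
Qed.


Lemma max_principle (s a L : R -> R) lam Rr eps sig : 0 < Rr ->
  (forall x, 0 <= x <= Rr -> ex_derive s x) ->
  (forall x, 0 <= x < Rr -> Derive s x = - a x * s x - lam - s x ^ 2) ->
  (forall x, 0 < x < Rr -> is_derive a x (L x)) ->
  (forall x, 0 < x < Rr -> L x < 0) ->
  (forall x, 0 <= x < Rr -> 0 < eps * s x) -> s 0 = sig -> s Rr = 0 ->
  forall r, 0 <= r <= Rr -> eps * s r <= eps * sig.
Proof.
  intros HR Hs Hsd Ha HL Hpos Hs0 HsR.
  set (S := fun x => eps * s x).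
  destruct (continuity_ab_maj S 0 Rr ltac:(lra)) as [m [Hm1 Hm2]].
  { intros c Hc. apply cont_of_der. unfold S. auto_derive. auto. }
  unfold S in Hm1.
  assert (Hes : 0 < eps * sig) by (rewrite <- Hs0; apply Hpos; lra).
  destruct (Req_dec m 0) as [->|Hm0].
  { intros r Hr. rewrite <- Hs0. auto. }
  destruct (Req_dec m Rr) as [->|HmR].
  { intros r Hr. specialize (Hm1 r Hr). rewrite HsR in Hm1. lra. }
  exfalso.
  assert (Hmi : 0 < m < Rr) by lra.
  assert (HD0 : Derive s m = 0).
  { assert (HdS : is_derive S m (eps * Derive s m)).
    { unfold S. apply is_derive_Reals. apply derivable_pt_lim_scal.
      apply is_derive_Reals. apply Derive_correct. apply Hs. lra. }
    apply local_max_deriv0 in HdS.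
    - assert (eps <> 0). { intro E. specialize (Hpos m ltac:(lra)). rewrite E in Hpos. lra. }
      apply Rmult_integral in HdS. destruct HdS; [contradiction|auto].
    - exists (Rmin m (Rr - m)). split. apply Rmin_pos; lra.
      intros x Hx. assert (Rmin m (Rr - m) <= m) by apply Rmin_l.
      assert (Rmin m (Rr - m) <= Rr - m) by apply Rmin_r.
      apply Hm1. lra. }
  set (h := fun x => - a x * s x - lam - s x ^ 2).
  assert (Hdh : is_derive h m (- L m * s m)).
  { unfold h.
    assert (Ea : ex_derive a m) by (exists (L m); apply Ha; lra).
    assert (Es : ex_derive s m) by (apply Hs; lra).
    assert (Hx : is_derive (fun x => - a x * s x - lam - s x ^ 2) m
                (- Derive a m * s m - a m * Derive s m - 2 * s m * Derive s m)).
    { auto_derive. repeat split; auto. eta_fix. ring. }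
    rewrite (is_derive_unique a m (L m)) in Hx by (apply Ha; lra).
    rewrite HD0 in Hx. replace (- L m * s m) with
      (- L m * s m - a m * 0 - 2 * s m * 0) by ring. exact Hx. }
  set (H := fun x => eps * h x).
  assert (HdH : is_derive H m (eps * (- L m * s m))).
  { unfold H. apply is_derive_Reals. apply derivable_pt_lim_scal.
    apply is_derive_Reals. exact Hdh. }
  destruct (push_right S H m Rr (eps * (- L m * s m))) as [x [Hx1 Hx2]].
  - lra.
  - intros x Hx. unfold S. auto_derive. apply Hs. lra.
  - intros x Hx. unfold S, H, h. rewrite Derive_scal. rewrite Hsd by lra. reflexivity.
  - unfold H, h. rewrite <- Hsd by lra. rewrite HD0. ring.
  - exact HdH.
  - specialize (HL m Hmi). specialize (Hpos m ltac:(lra)). nra.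
  - unfold S in Hx2. specialize (Hm1 x ltac:(lra)). lra.
Qed.


Lemma abs_le (x M : R) : Rabs x <= M -> - M <= x <= M.
Proof. intros H. unfold Rabs in H. destruct (Rcase_abs x); lra. Qed.

Lemma gap (w W p : R -> R) eps Rb c P p0 x0 :
  0 < Rb -> 0 < c -> 0 < p0 ->
  (forall x, 0 <= x <= Rb -> ex_derive w x /\ Derive w x = W x / p x) ->
  (forall x, 0 <= x <= Rb -> ex_derive W x) ->
  (forall x, 0 <= x < Rb -> Derive W x = - eps * p x * w x) ->
  (forall x, 0 <= x <= Rb -> p0 <= p x <= P) ->
  W 0 = 0 -> W Rb = - c * w Rb ->
  0 <= x0 <= Rb -> (forall x, 0 <= x <= Rb -> Rabs (w x) <= Rabs (w x0)) -> w x0 <> 0 ->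
  1 / (P * Rb * Rb / p0 + P * Rb / c) <= eps.
Proof.
  intros HRb Hc Hp0 Hw HW HdW Hp HW0 HWR Hx0 Hmax Hnz.
  set (M := Rabs (w x0)).
  assert (HM : 0 < M) by (apply Rabs_pos_lt; auto).
  assert (HP : p0 <= P) by (destruct (Hp 0 ltac:(lra)); lra).
  assert (Heps : 0 <= eps).
  { destruct (Rle_or_lt 0 eps) as [|Hneg]; auto. exfalso.
    set (f := fun x => w x * W x).
    assert (Hf : forall x, 0 <= x <= Rb -> ex_derive f x).
    { intros x Hx. unfold f. apply ex_derive_mult; [apply Hw|apply HW]; auto. }
    assert (Hfd : forall x, 0 <= x < Rb -> Derive f x = (W x)^2 / p x - eps * p x * (w x)^2).
    { intros x Hx. unfold f. rewrite Derive_mult by (try apply Hw; try apply HW; lra).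
      destruct (Hw x ltac:(lra)) as [_ ->]. rewrite HdW by lra.
      destruct (Hp x ltac:(lra)). field. lra. }
    assert (Hfp : forall x, 0 < x < Rb -> 0 <= Derive f x).
    { intros x Hx. rewrite Hfd by lra. destruct (Hp x ltac:(lra)).
      assert (0 <= (W x)^2 / p x) by (apply Rdiv_le_0_compat; [apply pow2_ge_0|lra]).
      assert (0 <= p x * (w x)^2) by (apply Rmult_le_pos; [lra|apply pow2_ge_0]).
      nra. }
    assert (Hcw : continuity_pt w x0) by (apply cont_of_der; apply Hw; auto).
    apply continuity_pt_locally with (eps := mkposreal (M/2) ltac:(lra)) in Hcw.
    destruct Hcw as [d Hd]. simpl in Hd.
    assert (Hd' : forall y, Rabs (y - x0) < d -> M / 2 < Rabs (w y)).
    { intros y Hy. specialize (Hd y Hy).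
      assert (Rabs (w x0) <= Rabs (w y) + Rabs (w y - w x0)).
      { replace (w x0) with (w y + - (w y - w x0)) at 1 by ring.
        eapply Rle_trans; [apply Rabs_triang|]. rewrite Rabs_Ropp. lra. }
      fold M in H. lra. }
    set (e := Rmin (d / 2) (Rb / 2)).
    assert (He0 : 0 < e) by (apply Rmin_pos; [destruct d; simpl; lra|lra]).
    assert (He1 : e <= d / 2) by apply Rmin_l.
    assert (He2 : e <= Rb / 2) by apply Rmin_r.
    assert (Hd0 : 0 < d) by (destruct d; simpl; lra).
    assert (Hab : exists al be, 0 <= al /\ al < be /\ be <= Rb /\ be - al = e /\
                  forall y, al < y < be -> Rabs (y - x0) < d).
    { destruct (Rle_or_lt (x0 + e) Rb).
      - exists x0, (x0 + e). repeat split; try lra.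
        intros y Hy. rewrite Rabs_right; lra.
      - exists (x0 - e), x0. repeat split; try lra.
        intros y Hy. rewrite Rabs_left; lra. }
    destruct Hab as [al [be [Ha0 [Hab [HbR [Hbe Hy]]]]]].
    destruct (mvt f al be Hab) as [xi [Hxi Hxi2]].
    { intros; apply Hf; lra. }
    assert (Hpos : 0 < Derive f xi).
    { rewrite Hfd by lra. destruct (Hp xi ltac:(lra)).
      specialize (Hd' xi (Hy xi Hxi)).
      assert (0 < (w xi)^2).
      { assert (w xi <> 0). { intro E. rewrite E, Rabs_R0 in Hd'. lra. }
        apply pow2_gt_0. auto. }
      assert (0 <= (W xi)^2 / p xi) by (apply Rdiv_le_0_compat; [apply pow2_ge_0|lra]).
      assert (0 < p xi * (w xi)^2) by (apply Rmult_lt_0_compat; lra).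
      nra. }
    assert (f 0 <= f al) by (apply mono; [lra| intros; apply Hf; lra | intros; apply Hfp; lra]).
    assert (f be <= f Rb) by (apply mono; [lra| intros; apply Hf; lra | intros; apply Hfp; lra]).
    assert (f 0 = 0) by (unfold f; rewrite HW0; ring).
    assert (f Rb <= 0) by (unfold f; rewrite HWR; assert (0 <= (w Rb)^2) by apply pow2_ge_0; nra).
    nra. }
  assert (HWb : forall r, 0 <= r <= Rb -> - (eps * P * M * Rb) <= W r <= eps * P * M * Rb).
  { intros r Hr. destruct (Req_dec r 0) as [->|Hr0].
    { rewrite HW0. assert (0 <= eps * P * M * Rb).
      { repeat apply Rmult_le_pos; lra. } lra. }
    destruct (mvt W 0 r) as [xi [Hxi Hxi2]]; [lra| intros; apply HW; lra|].
    rewrite HdW in Hxi2 by lra. rewrite HW0 in Hxi2.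
    destruct (Hp xi ltac:(lra)).
    destruct (abs_le (w xi) M (Hmax xi ltac:(lra))).
    assert (Hq : - (P * M) <= p xi * w xi <= P * M) by (split; nra).
    assert (Hq2 : - (P * M * Rb) <= p xi * w xi * r <= P * M * Rb) by (split; nra).
    split; nra. }
  set (B1 := eps * P * M * Rb / p0).
  assert (HB1 : 0 <= B1).
  { unfold B1. apply Rdiv_le_0_compat; [repeat apply Rmult_le_pos|]; lra. }
  assert (Hdw : forall x, 0 <= x <= Rb -> - B1 <= Derive w x <= B1).
  { intros x Hx. destruct (Hw x Hx) as [_ ->]. destruct (Hp x Hx).
    destruct (HWb x Hx). unfold B1.
    assert (0 <= eps * P * M * Rb) by (repeat apply Rmult_le_pos; lra).
    split.
    - apply Rle_trans with (- (eps * P * M * Rb) / p x).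
      + unfold Rdiv. rewrite !Ropp_mult_distr_l. apply Rmult_le_compat_neg_l; [lra|].
        apply Rinv_le_contravar; lra.
      + unfold Rdiv. apply Rmult_le_compat_r; [left; apply Rinv_0_lt_compat; lra|lra].
    - apply Rle_trans with (eps * P * M * Rb / p x).
      + unfold Rdiv. apply Rmult_le_compat_r; [left; apply Rinv_0_lt_compat; lra|lra].
      + unfold Rdiv. apply Rmult_le_compat_l; [lra|]. apply Rinv_le_contravar; lra. }
  assert (Hdiff : - (B1 * Rb) <= w x0 - w Rb <= B1 * Rb).
  { destruct (Req_dec x0 Rb) as [->|Hne]. { assert (0 <= B1 * Rb) by nra. lra. }
    destruct (mvt w x0 Rb) as [xi [Hxi Hxi2]]; [lra| intros; apply Hw; lra|].
    destruct (Hdw xi ltac:(lra)).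
    assert (Derive w xi * (Rb - x0) <= B1 * (Rb - x0)) by (apply Rmult_le_compat_r; lra).
    assert (- B1 * (Rb - x0) <= Derive w xi * (Rb - x0)) by (apply Rmult_le_compat_r; lra).
    assert (B1 * (Rb - x0) <= B1 * Rb) by (apply Rmult_le_compat_l; lra).
    split; nra. }
  assert (HwR : - (eps * P * M * Rb / c) <= w Rb <= eps * P * M * Rb / c).
  { destruct (HWb Rb ltac:(lra)). rewrite HWR in *.
    split.
    - apply Rmult_le_reg_l with c; auto. field_simplify; lra.
    - apply Rmult_le_reg_l with c; auto. field_simplify; lra. }
  assert (HMb : M <= eps * P * M * Rb / c + B1 * Rb).
  { assert (HMe : M = w x0 \/ M = - w x0) by (unfold M, Rabs; destruct Rcase_abs; auto).
    destruct HMe; lra. }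
  set (K := P * Rb * Rb / p0 + P * Rb / c).
  assert (HK : M <= eps * M * K).
  { unfold K. replace (eps * M * (P * Rb * Rb / p0 + P * Rb / c)) with
      (eps * P * M * Rb / c + B1 * Rb) by (unfold B1; field; lra). lra. }
  assert (HK0 : 0 < K).
  { unfold K. assert (0 < P) by lra.
    assert (0 < P * Rb * Rb / p0) by (apply Rdiv_lt_0_compat; [repeat apply Rmult_lt_0_compat|]; lra).
    assert (0 < P * Rb / c) by (apply Rdiv_lt_0_compat; [repeat apply Rmult_lt_0_compat|]; lra).
    lra. }
  fold K. assert (1 <= eps * K) by nra.
  apply Rmult_le_reg_r with K; auto. unfold Rdiv. rewrite Rmult_1_l, Rinv_l; lra.
Qed.


Lemma endpoint_pos (g k : R -> R) lam Rr : 0 < Rr -> (forall x, ex_derive g x) ->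
  (forall x, 0 <= x < Rr -> is_derive g x (- lam * k x)) ->
  (forall x, 0 <= x < Rr -> 0 < k x) -> 0 < g 0 -> g Rr = 0 ->
  forall r, 0 <= r < Rr -> 0 < g r.
Proof.
  intros HR Hg Hd Hk H0 HR0.
  assert (Hl : 0 < lam).
  { destruct (Rle_or_lt lam 0) as [Hl|]; auto. exfalso.
    assert (g 0 <= g Rr).
    { apply mono; [lra|intros; auto|]. intros x Hx.
      rewrite (is_derive_unique _ _ _ (Hd x ltac:(lra))).
      specialize (Hk x ltac:(lra)). nra. }
    lra. }
  intros r Hr.
  destruct (mvt g r Rr) as [c [Hc Hc2]]; [lra|auto|].
  rewrite (is_derive_unique _ _ _ (Hd c ltac:(lra))) in Hc2.
  specialize (Hk c ltac:(lra)).
  assert (0 < lam * k c * (Rr - r)) by (repeat apply Rmult_lt_0_compat; lra).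
  nra.
Qed.

Lemma ex_der0 (T : R -> R) : smooth T -> forall x, ex_derive T x.
Proof. intros H x. exact (H 0%nat x). Qed.
Lemma ex_der1 (T : R -> R) : smooth T -> forall x, ex_derive (Derive T) x.
Proof. intros H x. exact (H 1%nat x). Qed.

Lemma logconc (T : R -> R) x : smooth T -> 0 < T x ->
  is_derive (fun y => Derive T y / T y) x (Derive_n (fun s => ln (T s)) 2 x).
Proof.
  intros Hs Hp.
  assert (E : Derive_n (fun s => ln (T s)) 2 x = Derive (fun y => Derive T y / T y) x).
  { change (Derive_n (fun s => ln (T s)) 2 x) with
      (Derive (fun y => Derive (fun s => ln (T s)) y) x).
    apply Derive_ext_loc.
    assert (Hl := locally_pos T x (cont_of_der T x (ex_der0 T Hs x)) Hp).
    eapply filter_imp; [|exact Hl]. intros y Hy. simpl in Hy.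
    apply is_derive_unique. auto_derive.
    - split; [apply ex_der0; auto|split; auto].
    - eta_fix. field. lra. }
  rewrite E. apply Derive_correct. auto_derive.
  split; [apply ex_der1; auto|split; [apply ex_der0; auto|split; [lra|auto]]].
Qed.

Lemma flux (T u : R -> R) lam r : ex_derive T r -> ex_derive u r -> ex_derive (Derive u) r ->
  T r <> 0 ->
  Derive_n u 2 r + Derive T r / T r * Derive u r + lam * u r = 0 ->
  is_derive (fun x => T x * Derive u x) r (- lam * (T r * u r)).
Proof.
  intros H1 H2 H3 H4 H5. change (Derive_n u 2 r) with (Derive (Derive u) r) in H5.
  auto_derive. { repeat split; auto. }
  eta_fix.
  replace (Derive (Derive u) r) with (- (Derive T r / T r * Derive u r) - lam * u r) by lra.
  field. auto.
Qed.


Theorem lemma3p1 (Rr : R) (Theta u : R -> R) (sigma lam : R) :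
  0 < Rr ->
  smooth Theta ->
  (forall r, 0 <= r < Rr -> 0 < Theta r) ->
  sigma <> 0 ->
  lambda1 Rr Theta sigma = Finite lam ->
  is_eigenpair Rr Theta sigma lam u ->
  (forall r, 0 <= r <= Rr -> 0 < u r) ->
  ( (0 < sigma -> forall r, 0 <= r < Rr -> 0 < Derive u r) /\
    (sigma < 0 -> forall r, 0 <= r < Rr -> Derive u r < 0) /\
    (0 < sigma -> forall Rb, 0 < Rb < Rr ->
        Rbar_lt (lambda1 Rr Theta sigma) (lambda1 Rb Theta sigma)) ) /\
  ( (forall r, 0 <= r < Rr -> Derive_n (fun s => ln (Theta s)) 2 r < 0) ->
    (0 < sigma -> forall r, 0 <= r <= Rr ->
        0 <= Derive u r / u r <= sigma) /\
    (sigma < 0 -> forall r, 0 <= r <= Rr ->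
        sigma <= Derive u r / u r <= 0) ).
Proof.
  intros HR Hsm HT Hs0 Hlam Heig Hu.
  destruct Heig as [[Hdu [Hddu Hc2]] [Hnz [Heq [Hb0 HbR]]]].
  pose proof (ex_der0 Theta Hsm) as ET. pose proof (ex_der1 Theta Hsm) as ET1.
  assert (Hfl : forall x, 0 <= x < Rr ->
            is_derive (fun x => Theta x * Derive u x) x (- lam * (Theta x * u x))).
  { intros x Hx. apply flux; auto. specialize (HT x Hx). lra. }
  assert (Hk : forall x, 0 <= x < Rr -> 0 < Theta x * u x).
  { intros x Hx. apply Rmult_lt_0_compat; [apply HT|apply Hu]; lra. }
  assert (Ha : 0 < sigma -> forall r, 0 <= r < Rr -> 0 < Derive u r).
  { intros Hs r Hr.
    assert (H := endpoint_pos (fun x => Theta x * Derive u x) (fun x => Theta x * u x)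
                 lam Rr HR).
    simpl in H. specialize (H ltac:(intros; auto_derive; auto) Hfl Hk).
    assert (H0 : 0 < Theta 0 * Derive u 0).
    { rewrite Hb0. specialize (HT 0 ltac:(lra)). specialize (Hu 0 ltac:(lra)).
      repeat apply Rmult_lt_0_compat; auto. }
    specialize (H H0 ltac:(rewrite HbR; ring) r Hr).
    specialize (HT r Hr). nra. }
  assert (Hb : sigma < 0 -> forall r, 0 <= r < Rr -> Derive u r < 0).
  { intros Hs r Hr.
    assert (H := endpoint_pos (fun x => - (Theta x * Derive u x)) (fun x => Theta x * u x)
                 (- lam) Rr HR).
    simpl in H. specialize (H ltac:(intros; auto_derive; auto)).
    specialize (H ltac:(intros x Hx; replace (- - lam * (Theta x * u x)) with
       (- (- lam * (Theta x * u x))) by ring;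
       apply is_derive_Reals; apply derivable_pt_lim_opp; apply is_derive_Reals; auto) Hk).
    assert (H0 : 0 < - (Theta 0 * Derive u 0)).
    { rewrite Hb0. specialize (HT 0 ltac:(lra)). specialize (Hu 0 ltac:(lra)).
      assert (0 < Theta 0 * (- sigma * u 0)) by (repeat apply Rmult_lt_0_compat; lra).
      lra. }
    specialize (H H0 ltac:(rewrite HbR; ring) r Hr).
    specialize (HT r Hr). nra. }
  split; [split; [exact Ha| split; [exact Hb|]]|].
  - intros Hsp Rb HRb. rewrite Hlam.
    set (p := fun x => Theta x * (u x * u x)).
    assert (Hpc : forall x, 0 <= x <= Rb -> continuity_pt p x).
    { intros x Hx. apply cont_of_der. unfold p. auto_derive. repeat split; auto. }
    destruct (continuity_ab_maj p 0 Rb ltac:(lra) Hpc) as [xM [HM1 HM2]].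
    destruct (continuity_ab_min p 0 Rb ltac:(lra) Hpc) as [xm [Hm1 Hm2]].
    set (P := p xM). set (p0 := p xm).
    assert (Hp0 : 0 < p0).
    { unfold p0, p. specialize (HT xm ltac:(lra)). specialize (Hu xm ltac:(lra)).
      repeat apply Rmult_lt_0_compat; auto. }
    assert (HP : p0 <= P) by (apply HM1; lra).
    set (c := Theta Rb * u Rb * Derive u Rb).
    assert (Hc : 0 < c).
    { unfold c. specialize (HT Rb ltac:(lra)). specialize (Hu Rb ltac:(lra)).
      specialize (Ha Hsp Rb ltac:(lra)). repeat apply Rmult_lt_0_compat; auto. }
    set (K := P * Rb * Rb / p0 + P * Rb / c).
    assert (HK0 : 0 < K).
    { unfold K. assert (0 < P) by lra.
      assert (0 < P * Rb * Rb / p0) by (apply Rdiv_lt_0_compat; [|lra];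
        apply Rmult_lt_0_compat; [apply Rmult_lt_0_compat|]; lra).
      assert (0 < P * Rb / c) by (apply Rdiv_lt_0_compat; [|lra]; apply Rmult_lt_0_compat; lra).
      lra. }
    assert (Hlb : forall mu, (exists v, is_eigenpair Rb Theta sigma mu v) -> lam + 1 / K <= mu).
    { intros mu [v [[Hdv [Hddv Hcv]] [Hnzv [Heqv [Hv0 HvR]]]]].
      set (w := fun x => v x / u x).
      set (W := fun x => Theta x * (u x * Derive v x - v x * Derive u x)).
      assert (Hwc : forall x, 0 <= x <= Rb -> continuity_pt (fun x => Rabs (w x)) x).
      { intros x Hx. change (fun x => Rabs (w x)) with (comp Rabs w).
        apply continuity_pt_comp; [|apply Rcontinuity_abs].
        apply cont_of_der. unfold w. specialize (Hu x ltac:(lra)).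
        auto_derive. repeat split; auto. lra. }
      destruct (continuity_ab_maj _ 0 Rb ltac:(lra) Hwc) as [x0 [Hx01 Hx02]].
      assert (Hw0 : w x0 <> 0).
      { destruct Hnzv as [x [Hx Hvx]]. intro E.
        specialize (Hx01 x Hx). cbv beta in Hx01. rewrite E, Rabs_R0 in Hx01.
        assert (Rabs (w x) = 0) by (pose proof (Rabs_pos (w x)); lra).
        apply Rabs_eq_0 in H. unfold w in H. specialize (Hu x ltac:(lra)).
        apply Hvx. replace (v x) with (v x / u x * u x) by (field; lra). rewrite H. ring. }
      assert (Hg := gap w W p (mu - lam) Rb c P p0 x0 ltac:(lra) Hc Hp0).
      assert (H1 : 1 / K <= mu - lam).
      { apply Hg; auto.
        - intros x Hx. specialize (Hu x ltac:(lra)). specialize (HT x ltac:(lra)).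
          split.
          + unfold w. auto_derive. repeat split; auto. lra.
          + unfold w, W, p. apply is_derive_unique. auto_derive.
            { repeat split; auto. lra. }
            eta_fix. field. lra.
        - intros x Hx. unfold W. auto_derive. repeat split; auto.
        - intros x Hx. specialize (Hu x ltac:(lra)). specialize (HT x ltac:(lra)).
          specialize (Heq x ltac:(lra)). specialize (Heqv x Hx).
          change (Derive_n u 2 x) with (Derive (Derive u) x) in Heq.
          change (Derive_n v 2 x) with (Derive (Derive v) x) in Heqv.
          unfold w, W, p. apply is_derive_unique. auto_derive.
          { repeat split; auto. }
          eta_fix.
          replace (Derive (Derive u) x) with
            (- (Derive Theta x / Theta x * Derive u x) - lam * u x) by lra.
          replace (Derive (Derive v) x) with
            (- (Derive Theta x / Theta x * Derive v x) - mu * v x) by lra.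
          field. lra.
        - unfold W. rewrite Hv0, Hb0. ring.
        - unfold W, w, c. rewrite HvR. field. specialize (Hu Rb ltac:(lra)). lra. }
      lra. }
    destruct (Glb_Rbar_correct (fun lam0 => exists v, is_eigenpair Rb Theta sigma lam0 v))
      as [_ Hg].
    assert (Hle := Hg (Finite (lam + 1 / K)) Hlb).
    unfold lambda1. revert Hle.
    destruct (Glb_Rbar _) as [g| |]; simpl; intros Hle; auto.
    assert (0 < 1 / K) by (apply Rdiv_lt_0_compat; lra). lra.
  - intros Hlc.
    assert (Hs : forall x, 0 <= x <= Rr -> ex_derive (fun x => Derive u x / u x) x).
    { intros x Hx. specialize (Hu x Hx). auto_derive. repeat split; auto. lra. }
    assert (Hsd : forall x, 0 <= x < Rr ->
      Derive (fun x => Derive u x / u x) x =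
      - (fun x => Derive Theta x / Theta x) x * (fun x => Derive u x / u x) x - lam
      - (fun x => Derive u x / u x) x ^ 2).
    { intros x Hx. specialize (Hu x ltac:(lra)). specialize (HT x Hx).
      specialize (Heq x Hx). change (Derive_n u 2 x) with (Derive (Derive u) x) in Heq.
      apply is_derive_unique. auto_derive. { repeat split; auto. lra. }
      eta_fix. cbv beta.
      replace (Derive (Derive u) x) with
        (- (Derive Theta x / Theta x * Derive u x) - lam * u x) by lra.
      field. lra. }
    assert (HL : forall x, 0 < x < Rr -> is_derive (fun x => Derive Theta x / Theta x) x
                   ((fun x => Derive_n (fun s => ln (Theta s)) 2 x) x)).
    { intros x Hx. apply logconc; auto. apply HT; lra. }
    assert (HL2 : forall x, 0 < x < Rr -> (fun x => Derive_n (fun s => ln (Theta s)) 2 x) x < 0).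
    { intros x Hx. apply Hlc. lra. }
    assert (Hsig0 : (fun x => Derive u x / u x) 0 = sigma).
    { cbv beta. rewrite Hb0. field. specialize (Hu 0 ltac:(lra)). lra. }
    assert (HsR : (fun x => Derive u x / u x) Rr = 0).
    { cbv beta. rewrite HbR. field. specialize (Hu Rr ltac:(lra)). lra. }
    split.
    + intros Hsp r Hr.
      assert (Hpos : forall x, 0 <= x < Rr -> 0 < 1 * (fun x => Derive u x / u x) x).
      { intros x Hx. cbv beta. specialize (Ha Hsp x Hx). specialize (Hu x ltac:(lra)).
        rewrite Rmult_1_l. apply Rdiv_lt_0_compat; auto. }
      pose proof (max_principle _ _ _ lam Rr 1 sigma HR Hs Hsd HL HL2 Hpos Hsig0 HsR r Hr) as H.
      cbv beta in H. split; [|lra].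
      destruct (Req_dec r Rr) as [->|Hne]; [cbv beta in HsR; lra|].
      specialize (Hpos r ltac:(lra)). cbv beta in Hpos. lra.
    + intros Hsn r Hr.
      assert (Hpos : forall x, 0 <= x < Rr -> 0 < -1 * (fun x => Derive u x / u x) x).
      { intros x Hx. cbv beta. specialize (Hb Hsn x Hx). specialize (Hu x ltac:(lra)).
        replace (-1 * (Derive u x / u x)) with ((- Derive u x) / u x) by (field; lra).
        apply Rdiv_lt_0_compat; lra. }
      pose proof (max_principle _ _ _ lam Rr (-1) sigma HR Hs Hsd HL HL2 Hpos Hsig0 HsR r Hr) as H.
      cbv beta in H. split; [lra|].
      destruct (Req_dec r Rr) as [->|Hne]; [cbv beta in HsR; lra|].
      specialize (Hpos r ltac:(lra)). cbv beta in Hpos. lra.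
Qed.
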